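(* Let $G$ be a locally compact group, $\omega$ a weight on $G$, $1\le p<\infty$, and assume $L^p(G,\omega)$ is a Banach algebra under convolution. If for some positive number $\gamma$ and some $x\in G$ the operator $\gamma\,l_x$ on $L^p(G,\omega)$ is both a left multiplier of $L^p(G,\omega)$ and an algebra isomorphism, then $\gamma=1$ and $x=e_G$.
   Context: A weight on $G$ is a positive continuous function $\omega:G\to\mathbb{R}^+$ with $\omega(xy)\le\omega(x)\omega(y)$ for all $x,y\in G$ and $\omega(e_G)=1$. $L^p(G,\omega)$ is the space of measurable $f:G\to\mathbb{C}$ with $\|f\|_{p,\omega}:=\left(\int_G|f(x)|^p\omega(x)^p\,dx\right)^{1/p}<\infty$, with convolution product. The left translation is $l_xf(y)=f(x^{-1}y)$. A linear operator $L$ on $L^p(G,\omega)$ is a left multiplier if $L(f*g)=L(f)*g$ for all $f,g\in L^p(G,\omega)$. *)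

(* Defs.v *)
From HB Require Import structures.
From mathcomp Require Import all_boot all_order all_algebra.
From mathcomp Require Import all_classical all_reals all_analysis.
From mathcomp Require Import complex.
Set Implicit Arguments. Unset Strict Implicit. Unset Printing Implicit Defensive.
Import Order.TTheory GRing.Theory Num.Theory.
Import numFieldNormedType.Exports.
Local Open Scope classical_set_scope.
Local Open Scope ring_scope.

(* The Borel sigma-algebra of a topological space: generated by the open sets.
   Its carrier is (definitionally) the topological space itself. *)
Notation borel G := (g_sigma_algebraType (@open G)).

Section Defs.
Variables (R : realType) (G : ptopologicalType).
Variables (mul : G -> G -> G) (inv : G -> G) (e : G).

Definition locally_compact_group : Prop :=
  (forall x y z, mul x (mul y z) = mul (mul x y) z) /\
  (forall x, mul e x = x /\ mul x e = x) /\
  (forall x, mul (inv x) x = e /\ mul x (inv x) = e) /\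
  continuous (fun q : G * G => mul q.1 (inv q.2)) /\
  hausdorff_space G /\
  locally_compact [set: G].

Definition left_haar_measure (mu : {measure set (borel G) -> \bar R}) : Prop :=
  (forall (a : G) (E : set (borel G)), measurable E ->
         mu [set mul a y | y in E] = mu E) /\
      (forall K : set G, compact K -> (mu K < +oo)%E) /\
      (forall U : set G, open U -> U !=set0 -> (0 < mu U)%E) /\
      (forall E : set (borel G), measurable E ->
         mu E = ereal_inf [set mu U | U in [set U : set G | open U /\ E `<=` U]]) /\
      (forall U : set G, open U ->
         mu U = ereal_sup [set mu K | K in [set K : set G | compact K /\ K `<=` U]]).

Definition weight (w : G -> R) : Prop :=
  (forall x, 0 < w x) /\ continuous w /\
  (forall x y, w (mul x y) <= w x * w y) /\ w e = 1.

Definition cabs (z : R[i]) : R :=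
  Num.sqrt (complex.Re z ^+ 2 + complex.Im z ^+ 2).

Variable mu : {measure set (borel G) -> \bar R}.

Definition cmeasurable (f : borel G -> R[i]) : Prop :=
  measurable_fun [set: borel G] (fun x => complex.Re (f x)) /\
  measurable_fun [set: borel G] (fun x => complex.Im (f x)).

Definition wLnorm (w : G -> R) (p : R) (f : borel G -> R[i]) : \bar R :=
  Lnorm mu p%:E (fun x : borel G => (cabs (f x) * w x)%:E).

Definition inLp (w : G -> R) (p : R) (f : borel G -> R[i]) : Prop :=
  cmeasurable f /\ (wLnorm w p f < +oo)%E.

Definition cintegral (h : borel G -> R[i]) : R[i] :=
  Complex (Rintegral mu [set: borel G] (fun y => complex.Re (h y)))
          (Rintegral mu [set: borel G] (fun y => complex.Im (h y))).

Definition conv (f g : borel G -> R[i]) : borel G -> R[i] :=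
  fun x => cintegral (fun y => f y * g (mul (inv y) x)).

Definition ltrans (x : G) (f : borel G -> R[i]) : borel G -> R[i] :=
  fun y => f (mul (inv x) y).

Definition Lp_banach_algebra (w : G -> R) (p : R) : Prop :=
  forall f g, inLp w p f -> inLp w p g ->
    inLp w p (conv f g) /\
    (wLnorm w p (conv f g) <= wLnorm w p f * wLnorm w p g)%E.

(* elements of L^p are equivalence classes modulo mu-a.e. equality *)
Definition ae_eq (f g : borel G -> R[i]) : Prop :=
  {ae mu, forall y, f y = g y}.

Definition left_multiplier (w : G -> R) (p : R)
  (L : (borel G -> R[i]) -> (borel G -> R[i])) : Prop :=
  (forall f, inLp w p f -> inLp w p (L f)) /\
  (forall f g, inLp w p f -> inLp w p g -> ae_eq f g -> ae_eq (L f) (L g)) /\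
  (forall f g (a b : R[i]), inLp w p f -> inLp w p g ->
     ae_eq (L (fun y => a * f y + b * g y)) (fun y => a * L f y + b * L g y)) /\
  (forall f g, inLp w p f -> inLp w p g -> ae_eq (L (conv f g)) (conv (L f) g)).

Definition algebra_iso (w : G -> R) (p : R)
  (L : (borel G -> R[i]) -> (borel G -> R[i])) : Prop :=
  (forall f, inLp w p f -> inLp w p (L f)) /\
      (forall f g, inLp w p f -> inLp w p g -> ae_eq f g -> ae_eq (L f) (L g)) /\
      (forall f g (a b : R[i]), inLp w p f -> inLp w p g ->
         ae_eq (L (fun y => a * f y + b * g y)) (fun y => a * L f y + b * L g y)) /\
      (forall f g, inLp w p f -> inLp w p g -> ae_eq (L (conv f g)) (conv (L f) (L g))) /\
      (forall f g, inLp w p f -> inLp w p g -> ae_eq (L f) (L g) -> ae_eq f g) /\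
      (forall g, inLp w p g -> exists2 f, inLp w p f & ae_eq (L f) g).

End Defs.

(* Main.v *)
Require Import Defs.
From HB Require Import structures.
From mathcomp Require Import all_boot all_order all_algebra.
From mathcomp Require Import all_classical all_reals all_analysis.
From mathcomp Require Import complex.
From mathcomp Require Import measurable_realfun.
Import Order.TTheory GRing.Theory Num.Theory.
Import numFieldNormedType.Exports.
Local Open Scope classical_set_scope.
Local Open Scope ring_scope.
Set Implicit Arguments. Unset Strict Implicit. Unset Printing Implicit Defensive.

Section Grp.
Variables (G : ptopologicalType) (mul : G -> G -> G) (inv : G -> G) (e : G).
Hypothesis mulA : forall x y z, mul x (mul y z) = mul (mul x y) z.
Hypothesis mul1 : forall x, mul e x = x /\ mul x e = x.
Hypothesis mulV : forall x, mul (inv x) x = e /\ mul x (inv x) = e.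
Hypothesis phiC : continuous (fun q : G * G => mul q.1 (inv q.2)).

Lemma mul1g x : mul e x = x. Proof. by case: (mul1 x). Qed.
Lemma mulg1 x : mul x e = x. Proof. by case: (mul1 x). Qed.
Lemma mulVg x : mul (inv x) x = e. Proof. by case: (mulV x). Qed.
Lemma mulgV x : mul x (inv x) = e. Proof. by case: (mulV x). Qed.
Lemma mulKg x y : mul (inv x) (mul x y) = y.
Proof. by rewrite mulA mulVg mul1g. Qed.
Lemma mulKVg x y : mul x (mul (inv x) y) = y.
Proof. by rewrite mulA mulgV mul1g. Qed.
Lemma invK x : inv (inv x) = x.
Proof. by rewrite -[RHS](mulKg (inv x)) mulVg mulg1. Qed.
Lemma inv1 : inv e = e.
Proof. by rewrite -[LHS]mul1g mulgV. Qed.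
Lemma invE a b : mul a b = e -> inv a = b.
Proof. by move=> h; rewrite -(mulKg a b) h mulg1. Qed.
Lemma invM x y : inv (mul x y) = mul (inv y) (inv x).
Proof.
apply: invE; rewrite -mulA (mulA y) mulgV mul1g mulgV //.
Qed.

Section Cvg.
Context {T : Type} (F : set_system T) {FF : Filter F}.
Lemma cvg_phi (f g : T -> G) a b : f @ F --> a -> g @ F --> b ->
  (fun t => mul (f t) (inv (g t))) @ F --> mul a (inv b).
Proof.
move=> fa gb.
apply: (@continuous2_cvg T G G G F FF f g (fun a b => mul a (inv b)) a b) => //.
exact: (@phiC (a, b)).
Qed.
Lemma cvg_inv (g : T -> G) b : g @ F --> b -> (fun t => inv (g t)) @ F --> inv b.
Proof.
move=> gb; have h := cvg_phi (@cvg_cst G e T F FF) gb.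
rewrite mul1g in h.
by rewrite (eq_cvg _ _ (fun t => mul1g (inv (g t)))) in h; apply: h.
Qed.
Lemma cvg_mul (f g : T -> G) a b : f @ F --> a -> g @ F --> b ->
  (fun t => mul (f t) (g t)) @ F --> mul a b.
Proof.
move=> fa gb; have h := cvg_phi fa (cvg_inv gb).
rewrite invK in h.
by rewrite (eq_cvg _ _ (fun t => congr1 (mul (f t)) (invK (g t)))) in h.
Qed.
End Cvg.

Lemma cvg_mul2 (a b : G) : (fun q : G * G => mul q.1 q.2) @ (a, b) --> mul a b.
Proof. by apply: cvg_mul; [exact: cvg_fst | exact: cvg_snd]. Qed.
Lemma cvg_phi2 (a b : G) : (fun q : G * G => mul q.1 (inv q.2)) @ (a, b) --> mul a (inv b).
Proof. by apply: cvg_phi; [exact: cvg_fst | exact: cvg_snd]. Qed.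

Lemma open_pre (h : G -> G) (O : set G) : (forall y, h @ y --> h y) -> open O ->
  open (h @^-1` O).
Proof. by move=> hc oO; apply: open_comp => // y _; exact: hc. Qed.

Hypothesis hG : hausdorff_space G.

Lemma sep3 (x : G) : x <> e -> exists P Q1 Q2 : set G,
  [/\ nbhs e P, nbhs e Q1, nbhs e Q2 &
  forall k u v, P k -> Q1 u -> Q2 v -> mul (mul k (inv u)) v <> inv x].
Proof.
move=> xe.
have oN : open (~` [set inv x]).
  by rewrite openC; exact/accessible_closed_set1/hausdorff_accessible.
have Ne : (~` [set inv x]) e.
  by move=> /= h; apply: xe; rewrite -(invK x) -h inv1.
have nN : nbhs (mul e e) (~` [set inv x]) by rewrite mul1g; exact: open_nbhs_nbhs.
have [[A Q2] /= [nA nQ2] sub1] := cvg_mul2 nN.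
have nA' : nbhs (mul e (inv e)) A by rewrite inv1 mul1g.
have [[P Q1] /= [nP nQ1] sub2] := cvg_phi2 nA'.
exists P, Q1, Q2; split => // k u v Pk Q1u Q2v.
have Aku : A (mul k (inv u)) by exact: (sub2 (k, u)).
exact: (sub1 (mul k (inv u), v)).
Qed.

Variables (R : realType) (mu : {measure set (borel G) -> \bar R}) (w : G -> R) (p : R).
Hypothesis wC : continuous w.
Hypothesis p1 : 1 <= p.
Hypothesis finC : forall K : set G, compact K -> (mu K < +oo)%E.

Definition ind (A : set G) : borel G -> R[i] := fun y => ((\1_A y : R)%:C)%C.

Lemma open_meas (A : set G) : open A -> measurable (A : set (borel G)).
Proof. by move=> oA; apply: sub_sigma_algebra. Qed.

Lemma w_meas : measurable_fun [set: borel G] (w : borel G -> R).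
Proof.
apply: (measurability _ (RGenOpens.measurableE R)).
move=> _ [_ [a [b ->] <-]]; apply: measurableI => //; apply: open_meas.
apply: open_comp; last exact: interval_open.
by move=> y _; exact: wC.
Qed.

Lemma cabs_ind A y : cabs (ind A y) = \1_A y.
Proof.
rewrite /cabs /ind /= expr0n /= addr0 sqrtr_sqr ger0_norm //.
Qed.

Lemma inLp_ind (A C : set G) : open A -> compact C -> A `<=` C -> inLp mu w p (ind A).
Proof.
move=> oA cC AC; have mA := open_meas oA.
split.
  split; first exact: measurable_indic.
  exact: measurable_cst.
have [M [_ HM]] := compact_bounded (continuous_compact (continuous_subspaceT (fun y => @wC y)) cC).
rewrite /wLnorm unlock.
have mC : measurable (C : set (borel G)).
  have cl : closed C := compact_closed hG cC.
  rewrite -[C]setCK; apply: measurableC; apply: open_meas; exact/closed_openC.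
have p0 : p != 0 by rewrite gt_eqF // (lt_le_trans ltr01).
under eq_integral do rewrite cabs_ind abse_EFin poweR_EFin.
apply: poweR_lty.
have H : (\int[mu]_x (`|\1_A x * w x| `^ p)%:E <= \int[mu]_x (((M+1) `^ p * \1_A x)%:E))%E.
  apply: ge0_le_integral => //.
  - apply/measurable_EFinP; apply: (measurableT_comp (measurable_powR p)).
    apply: measurableT_comp => //.
    by apply: measurable_funM; [exact: measurable_indic | exact: w_meas].
  - by apply/measurable_EFinP; apply: measurable_funM => //; exact: measurable_indic.
  move=> y _; rewrite lee_fin.
  have [Ay|nAy] := pselect (A y).
    rewrite indicE (mem_set Ay) mul1r mulr1.
    have hw : `|w y| <= M + 1.
      by apply: (HM (M + 1)); [rewrite ltrDl | exists y => //; exact: AC].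
    apply: ge0_ler_powR => //; first exact: (le_trans ler01 p1).
    by rewrite nnegrE (le_trans _ hw).
  by rewrite indicE (memNset nAy) mul0r mulr0 normr0 powR0.
apply: (le_lt_trans H).
rewrite (@integralZl_indic _ _ _ mu setT measurableT (fun _ => A)) //; last first.
  by move=> /lt_geF; rewrite powR_ge0.
rewrite integral_indic // setIT.
rewrite lte_mul_pinfty ?lee_fin ?powR_ge0 //.
apply: (le_lt_trans _ (finC cC)).
by apply: le_measure => //; rewrite inE.
Qed.

Variables (gam : R) (x : G).
Definition Lop (f : borel G -> R[i]) : borel G -> R[i] :=
  fun y => ((gam%:C)%C * ltrans mul inv x f y).

Definition S1 (V K : set G) (z : G) : set G :=
  (fun y => mul (inv x) y) @^-1` V `&` (fun y => mul (inv y) z) @^-1` K.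
Definition S2 (V K : set G) (z : G) : set G :=
  (fun y => mul (inv x) y) @^-1` V `&` (fun y => mul (inv x) (mul (inv y) z)) @^-1` K.

Lemma Re_conv1 V K z :
  complex.Re (Defs.conv mul inv mu (Lop (ind V)) (ind K) z) =
  Rintegral mu setT (fun y => gam * \1_(S1 V K z) y).
Proof.
rewrite /Defs.conv /cintegral /=; congr Rintegral; apply: funext => y.
rewrite /ltrans /ind /= /S1 indicI /=.
by rewrite !mul0r !mulr0 ?subr0 ?addr0 mulrA.
Qed.

Lemma Re_conv2 V K z :
  complex.Re (Defs.conv mul inv mu (Lop (ind V)) (Lop (ind K)) z) =
  Rintegral mu setT (fun y => gam ^+ 2 * \1_(S2 V K z) y).
Proof.
rewrite /Defs.conv /cintegral /=; congr Rintegral; apply: funext => y.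
rewrite /ltrans /ind /= /S2 indicI /=.
rewrite !mul0r !mulr0 ?subr0 ?addr0 ?add0r ?subr0 mulr0 subr0 /=.
rewrite expr2; set a := \1_V _; set b := \1_K _.
by rewrite -!mulrA; congr (_ * _); rewrite mulrCA.
Qed.

Lemma Rint_ind (c : R) (S : set G) : 0 <= c -> measurable (S : set (borel G)) ->
  (mu S < +oo)%E -> Rintegral mu setT (fun y => c * \1_S y) = c * fine (mu S).
Proof.
move=> c0 mS Sfin; rewrite /Rintegral.
rewrite (@integralZl_indic _ _ _ mu setT measurableT (fun _ => S)) //; last first.
  by move=> /lt_geF; rewrite c0.
rewrite integral_indic // setIT fineM //.
by rewrite ge0_fin_numE.
Qed.

Lemma cont_l a y : (fun y => mul a y) @ y --> mul a y.
Proof. exact: (cvg_mul (cvg_cst a) cvg_id). Qed.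
Lemma cont_r z y : (fun y => mul (inv y) z) @ y --> mul (inv y) z.
Proof. exact: (cvg_mul (cvg_inv cvg_id) (cvg_cst z)). Qed.
Lemma cont_r2 z y : (fun y => mul (inv x) (mul (inv y) z)) @ y --> mul (inv x) (mul (inv y) z).
Proof. by apply: cvg_mul; [exact: cvg_cst | exact: cont_r]. Qed.

Lemma S1_open V K z : open V -> open K -> open (S1 V K z).
Proof.
move=> oV oK; apply: openI; first exact: (open_pre (@cont_l (inv x))).
exact: (open_pre (@cont_r z)).
Qed.
Lemma S2_open V K z : open V -> open K -> open (S2 V K z).
Proof.
move=> oV oK; apply: openI; first exact: (open_pre (@cont_l (inv x))).
exact: (open_pre (@cont_r2 z)).
Qed.

Hypothesis haar_inv : forall (a : G) (E : set (borel G)), measurable E ->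
         mu [set mul a y | y in E] = mu E.
Hypothesis haar_pos : forall U : set G, open U -> U !=set0 -> (0 < mu U)%E.

Lemma S_fin (V C : set G) (S : set G) : open V -> compact C -> V `<=` C ->
  S `<=` (fun y => mul (inv x) y) @^-1` V -> measurable (S : set (borel G)) ->
  (mu S < +oo)%E.
Proof.
move=> oV cC VC SV mS.
have mV := open_meas oV.
have mC : measurable (C : set (borel G)).
  have cl : closed C := compact_closed hG cC.
  rewrite -[C]setCK; apply: measurableC; apply: open_meas; exact/closed_openC.
have mI : measurable ([set mul x y | y in V] : set (borel G)).
  rewrite (_ : [set mul x y | y in V] = (fun y => mul (inv x) y) @^-1` V).
    by apply: open_meas; exact: (open_pre (@cont_l (inv x))).
  apply/seteqP; split => y /=.
    by move=> [v Vv <-]; rewrite mulKg.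
  by move=> Vy; exists (mul (inv x) y) => //; rewrite mulKVg.
apply: (@le_lt_trans _ _ (mu [set mul x y | y in V])).
  apply: le_measure => //; rewrite ?inE //.
  by move=> y /SV Vy; exists (mul (inv x) y) => //; rewrite mulKVg.
rewrite haar_inv //; apply: (le_lt_trans _ (finC cC)).
by apply: le_measure => //; rewrite inE.
Qed.

Hypothesis gam0 : 0 < gam.
Hypothesis HLm : forall f g, inLp mu w p f -> inLp mu w p g ->
  Defs.ae_eq mu (Lop (Defs.conv mul inv mu f g)) (Defs.conv mul inv mu (Lop f) g).
Hypothesis HLi : forall f g, inLp mu w p f -> inLp mu w p g ->
  Defs.ae_eq mu (Lop (Defs.conv mul inv mu f g)) (Defs.conv mul inv mu (Lop f) (Lop g)).

Lemma core V U K C : open V -> open U -> open K -> compact C -> V `<=` C -> K `<=` C ->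
  U `<=` V -> K e -> U e ->
  exists z, [/\ U (mul (inv x) z),
    gam * fine (mu (S1 V K z)) = gam ^+ 2 * fine (mu (S2 V K z)) &
    0 < fine (mu (S1 V K z))].
Proof.
move=> oV oU oK cC VC KC UV Ke Ue.
have iV := inLp_ind oV cC VC; have iK := inLp_ind oK cC KC.
have H : {ae mu, forall z, Defs.conv mul inv mu (Lop (ind V)) (ind K) z =
    Defs.conv mul inv mu (Lop (ind V)) (Lop (ind K)) z}.
  by apply: filterS2 (HLm iV iK) (HLi iV iK) => z h1 h2; rewrite -h1 -h2.
pose Z := (fun z => mul (inv x) z) @^-1` U.
have oZ : open Z by exact: (open_pre (@cont_l (inv x))).
have Zx : Z x by rewrite /Z /= mulVg.
have muZ : (0 < mu Z)%E by apply: haar_pos => //; exists x.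
have [z [Zz Hz]] : exists z, Z z /\ Defs.conv mul inv mu (Lop (ind V)) (ind K) z =
    Defs.conv mul inv mu (Lop (ind V)) (Lop (ind K)) z.
  apply: contrapT => nz; case: H => N [mN N0 sub].
  have ZN : Z `<=` N by move=> z Zz; apply: sub => /= hz; apply: nz; exists z.
  have : (mu Z <= mu N)%E by apply: le_measure => //; rewrite inE //; exact: open_meas.
  by rewrite N0 leNgt muZ.
have mS1 := open_meas (S1_open z oV oK).
have mS2 := open_meas (S2_open z oV oK).
have f1 : (mu (S1 V K z) < +oo)%E by apply: (S_fin oV cC VC) => // y [].
have f2 : (mu (S2 V K z) < +oo)%E by apply: (S_fin oV cC VC) => // y [].
exists z; split => //.
  have := congr1 (@complex.Re R) Hz; rewrite Re_conv1 Re_conv2 !Rint_ind //.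
    by rewrite exprn_ge0 // ltW.
  exact: ltW.
apply: fine_gt0; rewrite f1 andbT; apply: haar_pos; first exact: S1_open.
exists z; split; first exact: UV.
by rewrite /= mulVg.
Qed.

Hypothesis lcG : locally_compact [set: G].

Lemma final : gam = 1 /\ x = e.
Proof.
have [C nC [cC _]] : exists2 C, nbhs e C & compact C /\ closed C.
  move: lcG; rewrite /locally_compact /locally_of => /(_ e Logic.I).
  by rewrite withinET.
have oCi : open C° := @open_interior _ C.
have Cie : C° e by apply: nbhs_singleton; apply: nbhs_interior.
have CiC : C° `<=` C := @interior_subset _ C.
have [xe|xne] := pselect (x = e).
  have [z [_ Hz pos]] := core oCi oCi oCi cC CiC CiC (@subset_refl _ _) Cie Cie.
  have S12 : S2 C° C° z = S1 C° C° z.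
    rewrite /S2 /S1 xe inv1; apply/seteqP; split => y [h1 h2]; split => //; move: h2 => /=; rewrite mul1g //.
  rewrite S12 in Hz; split => //.
  have gn0 : gam != 0 by rewrite gt_eqF.
  have an0 : fine (mu (S1 C° C° z)) != 0 by rewrite gt_eqF.
  have h := mulIf an0 Hz; rewrite expr2 in h.
  by have := mulfI gn0 (etrans (mulr1 gam) h).
exfalso.
have [P [Q1 [Q2 [nP nQ1 nQ2 sep]]]] := sep3 xne.
pose K := P° `&` C°; pose V := Q2° `&` C°; pose U := Q1° `&` (Q2° `&` C°).
have oK : open K by apply: openI => //; exact: open_interior.
have oV : open V by apply: openI => //; exact: open_interior.
have oU : open U by apply: openI => //; exact: open_interior.
have Ke : K e by split => //; apply: nbhs_singleton; apply: nbhs_interior.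
have Ue : U e by split; [|split] => //; apply: nbhs_singleton; apply: nbhs_interior.
have UV : U `<=` V by move=> y [].
have KC : K `<=` C by move=> y [_ /CiC].
have VC : V `<=` C by move=> y [_ /CiC].
have [z [Uz Hz pos]] := core oV oU oK cC VC KC UV Ke Ue.
have S20 : S2 V K z = set0.
  apply/seteqP; split => // y [/= Vy Ky].
  apply: (sep (mul (inv x) (mul (inv y) z)) (mul (inv x) z) (mul (inv x) y)).
  - by case: Ky => /interior_subset.
  - by case: Uz => /interior_subset.
  - by case: Vy => /interior_subset.
  rewrite invM invK -!mulA mulKVg mulKVg mulVg mulg1 //.
move: Hz; rewrite S20 measure0 /= mulr0 => /eqP; rewrite mulf_eq0 gt_eqF //=.
by rewrite gt_eqF.
Qed.
End Grp.

Theorem lemma1p4 (R : realType) (G : ptopologicalType)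
  (mul : G -> G -> G) (inv : G -> G) (e : G)
  (mu : {measure set (borel G) -> \bar R}) (w : G -> R) (p : R)
  (gamma : R) (x : G) :
  locally_compact_group mul inv e ->
  left_haar_measure mul mu ->
  weight mul e w ->
  1 <= p ->
  Lp_banach_algebra mul inv mu w p ->
  0 < gamma ->
  left_multiplier mul inv mu w p (fun f => fun y => (gamma%:C)%C * ltrans mul inv x f y) ->
  algebra_iso mul inv mu w p (fun f => fun y => (gamma%:C)%C * ltrans mul inv x f y) ->
  gamma = 1 /\ x = e.
Proof.
move=> [mulA [mul1 [mulV [phiC [hG lcG]]]]] [hinv [hfin [hpos _]]] [_ [wC _]] p1 _ g0
  [_ [_ [_ HLm]]] [_ [_ [_ [HLi _]]]].
exact: (final mulA mul1 mulV phiC hG wC p1 hfin hinv hpos g0 HLm HLi lcG).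
Qed.
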